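(* Let $q\in(0,1]$ and $x,y\in[0,q]$. If $|x-y|\le q/e^2$, then $|\chi(x\|q)-\chi(y\|q)|\le\chi(|x-y|\,\|\,q)$.
   Context: For $q>0$, $\chi(x\|q)=x\log_2^2(x/q)$ for $x\in(0,1]$, extended by continuity with $\chi(0\|q)=0$. *)

(* Defs.v *)
From Stdlib Require Import Reals.
Open Scope R_scope.

Definition log2 (t : R) : R := ln t / ln 2.

(* chi(x||q) = x * log2^2 (x/q) for x > 0, extended by continuity with
   chi(0||q) = 0.  (Only used for x in [0,1], q > 0.) *)
Definition chi (x q : R) : R :=
  if Rle_dec x 0 then 0 else x * (log2 (x / q)) ^ 2.

(* Main.v *)
Require Import Defs.
From Stdlib Require Import Reals Lra Psatz.
From Coquelicot Require Import Coquelicot.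
Open Scope R_scope.

Section S.
Variable q : R.
Hypothesis hq : 0 < q.

Definition L t := ln (t / q).
Definition G t := t * (ln (t / q)) ^ 2.
Definition G' t := (ln (t / q)) ^ 2 + 2 * ln (t / q).

Lemma dG t : 0 < t -> derivable_pt_lim G t (G' t).
Proof.
  intro ht. apply is_derive_Reals. unfold G, G'.
  auto_derive.
  - apply Rdiv_lt_0_compat; lra.
  - unfold Rdiv. set (l := ln (t * / q)). field. split; lra.
Qed.

Lemma L_le0 t : 0 < t <= q -> L t <= 0.
Proof.
  intros [h1 h2]. unfold L. rewrite <- ln_1. apply ln_le.
  apply Rdiv_lt_0_compat; lra.
  apply (Rmult_le_reg_r q); [lra|]. unfold Rdiv. rewrite Rmult_assoc, Rinv_l; lra.
Qed.

Lemma L_lt t s : 0 < t < s -> L t < L s.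
Proof.
  intros [h1 h2]. unfold L. apply ln_increasing.
  apply Rdiv_lt_0_compat; lra.
  unfold Rdiv. apply Rmult_lt_compat_r; [apply Rinv_0_lt_compat|]; lra.
Qed.

Lemma L_le t s : 0 < t <= s -> L t <= L s.
Proof.
  intros [h1 h2]. destruct (Req_dec t s). subst; lra.
  left; apply L_lt; lra.
Qed.

Lemma L_small d : 0 < d -> d <= q / exp 2 -> L d <= -2.
Proof.
  intros h1 h2. unfold L.
  assert (E : exp 2 > 0) by apply exp_pos.
  assert (H : ln (d / q) <= ln (/ exp 2)).
  2: { rewrite ln_Rinv, ln_exp in H by lra. lra. }
  apply ln_le. apply Rdiv_lt_0_compat; lra.
  apply (Rmult_le_reg_r q); [lra|]. unfold Rdiv in *.
  rewrite Rmult_assoc, Rinv_l by lra. lra.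
Qed.

Lemma G_eq t : 0 < t -> chi t q = G t / (ln 2) ^ 2.
Proof.
  intro ht. unfold chi, G, log2. destruct (Rle_dec t 0); [lra|].
  assert (ln 2 > 0) by (rewrite <- ln_1; apply ln_increasing; lra).
  field. lra.
Qed.

Lemma G_ge0 t : 0 <= t -> 0 <= G t.
Proof. intro h. unfold G. apply Rmult_le_pos; [lra|]. apply pow2_ge_0. Qed.

Lemma Gp_ge t : -1 <= G' t.
Proof. unfold G'. set (l := ln (t / q)). pose proof (pow2_ge_0 (l + 1)). simpl in *. nra. Qed.

Lemma Gp_cmp u a d : 0 < u -> 0 < a -> u + a <= q -> u <= d -> L d <= -2 ->
  G' (u + a) <= G' u.
Proof.
  intros h1 h2 h3 h4 h5.
  assert (A : L u < L (u + a)) by (apply L_lt; lra).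
  assert (B : L u <= L d) by (apply L_le; lra).
  assert (C : L (u + a) <= 0) by (apply L_le0; lra).
  unfold G'. fold (L u) (L (u + a)).
  destruct (Rle_dec (L (u+a)) (-1)); nra.
Qed.

Lemma Gp_le a t : 0 < a <= t -> t <= q -> G' t <= (L a) ^ 2.
Proof.
  intros h1 h2.
  assert (A : L a <= L t) by (apply L_le; lra).
  assert (C : L t <= 0) by (apply L_le0; lra).
  unfold G'. fold (L t). nra.
Qed.

Lemma core a d : 0 < a -> 0 < d -> a + d <= q -> d <= q / exp 2 ->
  - G d <= G (a + d) - G a <= G d.
Proof.
  intros ha hd had hdq.
  assert (Ld := L_small d hd hdq).
  split.
  - destruct (MVT_cor2 G G' a (a + d)) as [c [Hc1 Hc2]]; [lra| |].
    { intros c Hc. apply dG. lra. }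
    assert (Gd : G d = d * (L d) ^ 2) by reflexivity.
    pose proof (Gp_ge c).
    assert (L4 : 4 <= L d ^ 2) by (simpl; nra).
    assert (d <= G d) by nra.
    assert (- d <= G' c * d) by nra.
    replace (a + d - a) with d in Hc1 by ring. lra.
  - set (K := (L a) ^ 2).
    assert (HK : 0 <= K) by apply pow2_ge_0.
    assert (Hu : forall u, 0 < u < d -> G (a + d) - G d <= G a + K * u).
    { intros u Hu.
      destruct (MVT_cor2 (fun t => G (t + a) - G t) (fun t => G' (t + a) - G' t) u d)
        as [c [Hc1 Hc2]]; [lra| |].
      { intros c Hc. apply derivable_pt_lim_minus.
        - replace (G' (c + a)) with (G' (c + a) * (1 + 0)) by ring.
          apply (derivable_pt_lim_comp (fun t => t + a) G c).
          + apply derivable_pt_lim_plus. apply derivable_pt_lim_id. apply derivable_pt_lim_const.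
          + apply dG. lra.
        - apply dG. lra. }
      assert (P := Gp_cmp c a d ltac:(lra) ha ltac:(lra) ltac:(lra) Ld).
      destruct (MVT_cor2 G G' a (a + u)) as [c' [Hc1' Hc2']]; [lra| |].
      { intros c0 Hc0. apply dG. lra. }
      assert (P' := Gp_le a c' ltac:(lra) ltac:(lra)). fold K in P'.
      assert (Gu := G_ge0 u ltac:(lra)).
      simpl in Hc1. replace (d + a) with (a + d) in Hc1 by ring.
      replace (u + a) with (a + u) in Hc1 by ring.
      nra. }
    destruct (Rle_dec (G (a + d) - G a) (G d)) as [h|h]; [exact h|].
    exfalso. set (e := G (a + d) - G d - G a).
    assert (He : 0 < e) by (unfold e; lra).
    set (u := Rmin (d / 2) (e / (2 * (K + 1)))).
    assert (u1 : u <= d / 2) by apply Rmin_l.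
    assert (u2 : u <= e / (2 * (K + 1))) by apply Rmin_r.
    assert (u3 : 0 < u).
    { unfold u, Rmin. destruct (Rle_dec _ _); [lra|].
      apply Rdiv_lt_0_compat; lra. }
    assert (u4 : K * u <= e / 2).
    { apply Rle_trans with ((K + 1) * u). nra.
      apply Rle_trans with ((K + 1) * (e / (2 * (K + 1)))).
      apply Rmult_le_compat_l; lra. right. field. lra. }
    specialize (Hu u ltac:(lra)). unfold e in *. lra.
Qed.

End S.

Lemma chi0 q : chi 0 q = 0.
Proof. unfold chi. destruct (Rle_dec 0 0); lra. Qed.

Lemma core_chi q a d : 0 < q -> 0 <= a -> 0 < d -> a + d <= q -> d <= q / exp 2 ->
  Rabs (chi (a + d) q - chi a q) <= chi d q.
Proof.
  intros hq ha hd had hdq.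
  assert (c2 : (ln 2) ^ 2 > 0).
  { assert (ln 2 > 0) by (rewrite <- ln_1; apply ln_increasing; lra). simpl; nra. }
  assert (l2 : ln 2 > 0) by (rewrite <- ln_1; apply ln_increasing; lra).
  rewrite (G_eq q d hd), (G_eq q (a + d)) by lra.
  destruct (Req_dec a 0) as [->|ha'].
  - rewrite chi0, Rplus_0_l, Rminus_0_r. rewrite Rabs_pos_eq. lra.
    apply Rdiv_le_0_compat; [apply G_ge0; lra| lra].
  - rewrite (G_eq q a) by lra.
    destruct (core q hq a d ltac:(lra) hd had hdq) as [h1 h2].
    apply Rabs_le. split.
    + apply (Rmult_le_reg_r (ln 2 ^ 2)); [lra|].
      replace ((G q (a + d) / ln 2 ^ 2 - G q a / ln 2 ^ 2) * ln 2 ^ 2) with (G q (a+d) - G q a) by (field; lra).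
      replace (- (G q d / ln 2 ^ 2) * ln 2 ^ 2) with (- G q d) by (field; lra). lra.
    + apply (Rmult_le_reg_r (ln 2 ^ 2)); [lra|].
      replace ((G q (a + d) / ln 2 ^ 2 - G q a / ln 2 ^ 2) * ln 2 ^ 2) with (G q (a+d) - G q a) by (field; lra).
      replace ((G q d / ln 2 ^ 2) * ln 2 ^ 2) with (G q d) by (field; lra). lra.
Qed.

Theorem lemma26 (q x y : R) :
  0 < q <= 1 ->
  0 <= x <= q ->
  0 <= y <= q ->
  Rabs (x - y) <= q / exp 2 ->
  Rabs (chi x q - chi y q) <= chi (Rabs (x - y)) q.
Proof.
  intros hq hx hy hd.
  destruct (Rtotal_order x y) as [h|[h|h]].
  - rewrite Rabs_minus_sym in hd |- *. rewrite (Rabs_minus_sym x y).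
    rewrite (Rabs_pos_eq (y - x)) in * by lra.
    replace y with (x + (y - x)) at 1 by ring.
    apply core_chi; lra.
  - subst. rewrite !Rminus_diag, Rabs_R0, chi0. lra.
  - rewrite (Rabs_pos_eq (x - y)) in * by lra.
    replace x with (y + (x - y)) at 1 by ring.
    apply core_chi; lra.
Qed.
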